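(* Let $E$ be a finite Galois extension of $\mathbb{Q}$ with Galois group $G$, with a fixed embedding $E\hookrightarrow\mathbb{C}$, and let $V$ be a finite-dimensional $E$-vector space. Let $W_\mathbb{Q}\subseteq V_\mathbb{Q}$ be any $\mathbb{Q}$-subspace of the underlying $\mathbb{Q}$-vector space of $V$, and let $W_\mathbb{C}=W_\mathbb{Q}\otimes_\mathbb{Q}\mathbb{C}\subseteq V_\mathbb{C}$. (i) If there exists $\sigma_0\in G$ with $P_{\sigma_0}(W_\mathbb{C})=V_{\sigma_0}$, then $P_\sigma(W_\mathbb{C})=V_\sigma$ for all $\sigma\in G$. (ii) If there exist $\sigma_0\neq\tau_0$ in $G$ with $P_{\sigma_0,\tau_0}(W_\mathbb{C})=V_{\sigma_0}\oplus V_{\tau_0}$, then $P_{\sigma,\tau}(W_\mathbb{C})=V_\sigma\oplus V_\tau$ for every pair $(\sigma,\tau)=(\kappa\sigma_0,\kappa\tau_0)$ with $\kappa\in G$.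
   Context: $V_\mathbb{C}=V\otimes_\mathbb{Q}\mathbb{C}$, on which $E$ acts via the first factor, making it a module over $E\otimes_\mathbb{Q}\mathbb{C}$. Identifying each $\sigma\in G$ with the embedding $E\xrightarrow{\sigma}E\subset\mathbb{C}$, one has $V_\mathbb{C}=\bigoplus_{\sigma\in G}V_\sigma$ where $V_\sigma=\{w\in V_\mathbb{C}: (e\otimes1)w=\sigma(e)w \text{ for all } e\in E\}$. $P_\sigma:V_\mathbb{C}\to V_\sigma$ is the $\mathbb{C}$-linear projection onto the summand $V_\sigma$, and for $\sigma\neq\tau$, $P_{\sigma,\tau}=P_\sigma\oplus P_\tau:V_\mathbb{C}\to V_\sigma\oplus V_\tau$. *)

(* Defs.v *)
From HB Require Import structures.
From mathcomp Require Import all_boot all_order all_algebra all_fingroup all_field.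
From mathcomp Require Import complex.
From mathcomp Require Import reals.
Set Implicit Arguments. Unset Strict Implicit. Unset Printing Implicit Defensive.
Import GRing.Theory Num.Theory.
Local Open Scope ring_scope.

(* Setting.
   - E is modelled by L : splittingFieldType rat (finite extension of Q),
     assumed Galois over Q; G = 'Gal({:L} / 1).
   - C is modelled by R[i] for R : realType (the complex numbers).
   - iota : {rmorphism L -> R[i]} is the fixed embedding E -> C.
   - V: a finite-dimensional E-vector space is a finite-dimensional Q-vector
     space V_Q (= 'rV[rat]_m after choosing a Q-basis) together with a
     Q-algebra action rho : E -> End_Q(V_Q) (row vectors, v |-> v *m rho e).
   - V_C = V_Q (x)_Q C = 'rV[R[i]]_m, with E acting via the first factor,
     i.e. by the matrix rho e with entries mapped into C.
   - A Q-subspace W_Q of V_Q is the row space of a rational matrix; W_C is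
     the row space of the same matrix read in C. *)

Section Setup.
Variables (R : realType) (L : splittingFieldType rat) (m : nat).
Variable (iota : {rmorphism L -> R[i]}) (rho : L -> 'M[rat]_m).

Definition Emodule_action : Prop :=
  [/\ rho 1 = 1%:M,
      forall a b, rho (a + b) = rho a + rho b,
      forall a b, rho (a * b) = rho a *m rho b
    & forall (c : rat) a, rho (c *: a) = c *: rho a].

Definition rhoC (e : L) : 'M[R[i]]_m := map_mx (fun q : rat => ratr q) (rho e).

(* V_sigma = { w in V_C : (e (x) 1) w = sigma(e) w for all e in E },
   where sigma is identified with the embedding iota o sigma.  Since the
   condition is Q-linear in e, it is imposed on a Q-basis of E. *)
Definition Vsig (s : gal_of {:L}) : 'M[R[i]]_m :=
  (\bigcap_(i < \dim {:L})
     eigenspace (rhoC (vbasis {:L})`_i) (iota (s (vbasis {:L})`_i)))%MS.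

Definition Psig (s : gal_of {:L}) : 'M[R[i]]_m :=
  proj_mx (Vsig s) (\sum_(t in 'Gal({:L} / 1%VS)%g | t != s) Vsig t)%MS.

Definition Psig2 (s t : gal_of {:L}) : 'M[R[i]]_m :=
  proj_mx (Vsig s + Vsig t)%MS
          (\sum_(u in 'Gal({:L} / 1%VS)%g | (u != s) && (u != t)) Vsig u)%MS.

End Setup.

(* composition kappa o sigma (apply sigma first).  Note MathComp's
   Galois group product satisfies (x * y) a = y (x a). *)
Definition galcomp (L : splittingFieldType rat) (k s : gal_of {:L}) : gal_of {:L} :=
  (s * k)%g.

Definition toC (R : realType) (k m : nat) (W : 'M[rat]_(k, m)) : 'M[R[i]]_(k, m) :=
  map_mx (fun q : rat => ratr q) W.

(* Main.v *)
Require Import Defs.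
From HB Require Import structures.
From mathcomp Require Import all_boot all_order all_algebra all_fingroup all_field.
From mathcomp Require Import complex reals.
From mathcomp Require Import zify.
Import GRing.Theory Num.Theory.
Local Open Scope ring_scope.

Lemma proj_mx_uniq (F : fieldType) n (U V U' V' : 'M[F]_n) :
  (U :=: U')%MS -> (V :=: V')%MS -> (1%:M <= U + V)%MS -> (U :&: V = 0)%MS ->
  proj_mx U V = proj_mx U' V'.
Proof.
move=> eU eV full dir.
have full' : (1%:M <= U' + V')%MS.
  by apply: submx_trans full _; rewrite (adds_eqmx eU eV).
set P := proj_mx U V; set P' := proj_mx U' V'.
have hP : (P <= U)%MS by rewrite -[P]mul1mx proj_mx_sub.
have hP' : (P' <= U)%MS by rewrite eU -[P']mul1mx proj_mx_sub.
have hQ : (1%:M - P <= V)%MS by rewrite -{1}[P]mul1mx proj_mx_compl_sub.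
have hQ' : (1%:M - P' <= V)%MS by rewrite eV -{1}[P']mul1mx proj_mx_compl_sub.
have h1 : (P - P' <= U)%MS by rewrite addmx_sub // eqmx_opp.
have h2 : (P - P' <= V)%MS.
  have -> : P - P' = (1%:M - P') - (1%:M - P) by rewrite opprB addrCA addrAC subrr add0r.
  by rewrite addmx_sub // eqmx_opp.
have : (P - P' <= U :&: V)%MS by rewrite sub_capmx h1 h2.
by rewrite dir submx0 subr_eq0 => /eqP.
Qed.

Lemma map_proj_mx (F1 F2 : fieldType) (g : {rmorphism F1 -> F2}) n (U V : 'M[F1]_n) :
  map_mx g (proj_mx U V) = proj_mx (map_mx g U) (map_mx g V).
Proof. by rewrite /proj_mx map_mxM map_pinvmx !map_col_mx map_mx0. Qed.

Lemma map_bigcap (F1 F2 : fieldType) (g : {rmorphism F1 -> F2}) n (I : Type)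
   (r : seq I) (P : pred I) (A : I -> 'M[F1]_n) :
  (map_mx g (\bigcap_(i <- r | P i) A i) :=: \bigcap_(i <- r | P i) map_mx g (A i))%MS.
Proof.
elim/big_rec2: _ => [|i X Y Pi eXY]; first by rewrite map_scalar_mx rmorph1.
exact: eqmx_trans (map_capmx _ _ _) (cap_eqmx (eqmx_refl _) eXY).
Qed.

Lemma map_bigsum (F1 F2 : fieldType) (g : {rmorphism F1 -> F2}) n (I : Type)
   (r : seq I) (P : pred I) (A : I -> 'M[F1]_n) :
  (map_mx g (\sum_(i <- r | P i) A i)%MS :=: \sum_(i <- r | P i) map_mx g (A i))%MS.
Proof.
elim/big_rec2: _ => [|i X Y Pi eXY]; first by rewrite map_mx0.
apply: eqmx_trans (map_addsmx g (A i) Y) _.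
exact: adds_eqmx (eqmx_refl _) eXY.
Qed.

Set Implicit Arguments. Unset Strict Implicit.

Definition rK (L : splittingFieldType rat) m (rho : L -> 'M[rat]_m) (K : fieldType)
  (e : L) : 'M[K]_m := map_mx (fun q : rat => ratr q) (rho e).
Definition VK (L : splittingFieldType rat) m (rho : L -> 'M[rat]_m) (K : fieldType)
  (f : L -> K) (s : gal_of {:L}) : 'M[K]_m :=
  (\bigcap_(i < \dim {:L}) eigenspace (rK rho K (vbasis {:L})`_i) (f (s (vbasis {:L})`_i)))%MS.
Definition SK (L : splittingFieldType rat) m (rho : L -> 'M[rat]_m) (K : fieldType)
  (f : L -> K) (s : gal_of {:L}) : 'M[K]_m :=
  (\sum_(t in 'Gal({:L} / 1%VS)%g | t != s) VK rho f t)%MS.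
Definition SK2 (L : splittingFieldType rat) m (rho : L -> 'M[rat]_m) (K : fieldType)
  (f : L -> K) (s t : gal_of {:L}) : 'M[K]_m :=
  (\sum_(u in 'Gal({:L} / 1%VS)%g | (u != s) && (u != t)) VK rho f u)%MS.

Lemma Vsig_VK (R : realType) (L : splittingFieldType rat) (iota : {rmorphism L -> R[i]}) m rho s :
  Vsig iota rho s = @VK L m rho _ iota s.
Proof. by []. Qed.
Lemma Psig_VK (R : realType) (L : splittingFieldType rat) (iota : {rmorphism L -> R[i]}) m rho s :
  Psig iota rho s = proj_mx (@VK L m rho _ iota s) (SK rho iota s).
Proof. by []. Qed.
Lemma Psig2_VK (R : realType) (L : splittingFieldType rat) (iota : {rmorphism L -> R[i]}) m rho s t :
  Psig2 iota rho s t = proj_mx (@VK L m rho _ iota s + VK rho iota t)%MS (SK2 rho iota s t).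
Proof. by []. Qed.

Section Rho.
Variables (L : splittingFieldType rat) (m : nat) (rho : L -> 'M[rat]_m).
Hypothesis rhoA : Emodule_action rho.
Variables (K : fieldType) (phi : {rmorphism rat -> K}).
Local Notation r := (rK rho K).

Lemma rKE e : r e = map_mx phi (rho e).
Proof. by apply: eq_map_mx => q; rewrite fmorph_eq_rat. Qed.

Lemma rK1 : r 1 = 1%:M.
Proof. by case: rhoA => h1 _ _ _; rewrite !rKE h1 map_scalar_mx rmorph1. Qed.
Lemma rKD a b : r (a + b) = r a + r b.
Proof. by case: rhoA => _ h _ _; rewrite !rKE h map_mxD. Qed.
Lemma rKM a b : r (a * b) = r a *m r b.
Proof. by case: rhoA => _ _ h _; rewrite !rKE h map_mxM. Qed.
Lemma rKZ c a : r (c *: a) = ratr c *: r a.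
Proof. by case: rhoA => _ _ _ h; rewrite !rKE h map_mxZ fmorph_eq_rat. Qed.
Lemma rK0 : r 0 = 0.
Proof. by have := rKD 0 0; rewrite addr0 => h; apply: (addrI (r 0)); rewrite -h addr0. Qed.
End Rho.

Section Core.
Variables (L : splittingFieldType rat) (m : nat) (rho : L -> 'M[rat]_m).
Hypothesis rhoA : Emodule_action rho.
Local Notation r := (rK rho L).
Local Notation VL := (VK rho (@id L)).

Lemma rK_sum (I : Type) (s : seq I) (P : pred I) (F : I -> L) :
  r (\sum_(i <- s | P i) F i) = \sum_(i <- s | P i) r (F i).
Proof. exact: (big_morph r (rKD rhoA (in_alg L)) (rK0 rhoA (in_alg L))). Qed.

Lemma gal_alg (s : gal_of {:L}) c : s (c%:A) = c%:A.
Proof. by rewrite linearZ /= rmorph1. Qed.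

Lemma VL_P (s : gal_of {:L}) k (W : 'M[L]_(k, m)) :
  reflect (forall e, W *m r e = s e *: W) (W <= VL s)%MS.
Proof.
apply: (iffP idP) => [sW e | h]; last first.
  by apply/sub_bigcapmxP => i _; apply/eigenspaceP; rewrite h.
have hb i : W *m r (vbasis {:L})`_i = s (vbasis {:L})`_i *: W.
  case: (ltnP i (\dim {:L})) => [lti|gei].
    have := (sub_bigcapmxP sW (Ordinal lti) isT).
    by move/eigenspaceP.
  by rewrite nth_default ?size_tuple // (rK0 rhoA (in_alg L)) mulmx0 rmorph0 scale0r.
rewrite (coord_vbasis (memvf e)) rK_sum mulmx_sumr linear_sum /= scaler_suml.
apply: eq_bigr => i _.
rewrite (rKZ rhoA (in_alg L)) -scalemxAr hb linearZ /= scalerA.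
by rewrite -mulr_algl -(fmorph_eq_rat (in_alg L)) /= mulrC mulr_algl linearZ /= mulr_algl.
Qed.

Hypothesis galL : galois 1%VS {:L}.
Local Notation al := (separable_generator 1%VS {:L}).

Lemma memL e : e \in <<1; al>>%VS.
Proof.
case/and3P: galL => s1 sep _.
by rewrite -eq_adjoin_separable_generator ?memvf.
Qed.

Lemma eig_poly k (W : 'M[L]_(k, m)) a : W *m r al = a *: W ->
  forall p : {poly rat},
  W *m r ((map_poly (in_alg L) p).[al]) = (map_poly (in_alg L) p).[a] *: W.
Proof.
move=> hW; elim/poly_ind => [|p c IH].
  by rewrite map_poly0 !horner0 (rK0 rhoA (in_alg L)) mulmx0 scale0r.
rewrite rmorphD rmorphM /= map_polyX map_polyC /= !hornerMXaddC.
rewrite (rKD rhoA (in_alg L)) (rKM rhoA (in_alg L)) mulmxDr mulmxA IH.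
rewrite -scalemxAl hW scalerA scalerDl; congr (_ + _).
rewrite (rKZ rhoA (in_alg L)) (rK1 rhoA (in_alg L)) -scalemxAr mulmx1.
by rewrite -(fmorph_eq_rat (in_alg L)).
Qed.

Lemma gal_poly (s : gal_of {:L}) (p : {poly rat}) x :
  s ((map_poly (in_alg L) p).[x]) = (map_poly (in_alg L) p).[s x].
Proof.
rewrite -horner_map /= -map_poly_comp; congr (_.[_]).
by apply: eq_map_poly => c /=; exact: gal_alg.
Qed.

Lemma in_VL (s : gal_of {:L}) k (W : 'M[L]_(k, m)) :
  W *m r al = s al *: W -> (W <= VL s)%MS.
Proof.
move=> hW; apply/VL_P => e; have /Fadjoin1_polyP [p ->] := memL e.
by rewrite (eig_poly hW) gal_poly.
Qed.

Lemma gal_inj (s t : gal_of {:L}) : s al = t al -> s = t.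
Proof.
move=> h; apply/eqP/gal_eqP => e _; have /Fadjoin1_polyP [p ->] := memL e.
by rewrite !gal_poly h.
Qed.

Lemma VL_sub (s : gal_of {:L}) : (VL s <= eigenspace (r al) (s al))%MS.
Proof. by apply/eigenspaceP; have /VL_P := submx_refl (VL s); apply. Qed.

Lemma eig_VL (s : gal_of {:L}) : (eigenspace (r al) (s al) <= VL s)%MS.
Proof. by apply: in_VL; apply/eigenspaceP. Qed.


Local Notation G := ('Gal({:L} / 1%VS)%g).


Lemma dirL (s : gal_of {:L}) : s \in G -> (VL s :&: SK rho id s <= (0 : 'M_m))%MS.
Proof.
move=> Gs.
have inj : {in [in G] &, injective (fun s : gal_of {:L} => s al)}.
  by move=> ? ? _ _; apply: gal_inj.
have := mxdirect_sum_eigenspace (r al) inj.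
move/mxdirect_sumsP/(_ s Gs) => h.
rewrite -h capmxS ?VL_sub // /SK sumsmxS // => t _; exact: VL_sub.
Qed.

Lemma dirL2 (s t : gal_of {:L}) : s \in G -> t \in G -> s != t ->
  ((VL s + VL t) :&: SK2 rho id s t <= (0 : 'M_m))%MS.
Proof.
move=> Gs Gt st.
set X := VL s; set Y := VL t; set Z := SK2 rho id s t.
have hYZs : (Y + Z <= SK rho id s)%MS.
  rewrite addsmx_sub; apply/andP; split.
    by apply: (sumsmx_sup t) => //; rewrite Gt eq_sym.
  apply/sumsmx_subP => u /andP[Gu /andP[us _]]; by apply: (sumsmx_sup u); rewrite ?Gu ?us.
have hZt : (Z <= SK rho id t)%MS.
  apply/sumsmx_subP => u /andP[Gu /andP[_ ut]]; by apply: (sumsmx_sup u); rewrite ?Gu ?ut.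
have c1 : (X :&: (Y + Z) <= (0 : 'M_m))%MS.
  exact: submx_trans (capmxS (submx_refl X) hYZs) (dirL Gs).
have c2 : (Y :&: Z <= (0 : 'M_m))%MS.
  exact: submx_trans (capmxS (submx_refl Y) hZt) (dirL Gt).
rewrite submx0 -mxrank_eq0.
have e1 := mxrank_sum_cap X (Y + Z)%MS.
have e2 := mxrank_sum_cap Y Z.
have e3 := mxrank_sum_cap (X + Y)%MS Z.
have e4 := mxrank_sum_cap X Y.
move: c1 c2; rewrite !submx0 -!mxrank_eq0 => /eqP c1 /eqP c2.
rewrite addsmxA in e1.
apply/eqP; lia.
Qed.

Lemma horner_r n (e : m = n.+1) (q : {poly rat}) :
  horner_mx (castmx (e, e) (r al)) (map_poly (in_alg L) q) =
  castmx (e, e) (r ((map_poly (in_alg L) q).[al])).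
Proof.
subst m; rewrite !castmx_id.
elim/poly_ind: q => [|p c IH].
  by rewrite map_poly0 rmorph0 horner0 (rK0 rhoA (in_alg L)).
rewrite rmorphD rmorphM /= map_polyX map_polyC /= hornerMXaddC.
rewrite (rKD rhoA (in_alg L)) (rKM rhoA (in_alg L)) rmorphD rmorphM /=.
rewrite IH horner_mx_X horner_mx_C mulmxE; congr (_ + _).
rewrite (rKZ rhoA (in_alg L)) (rK1 rhoA (in_alg L)) scalemx1.
by rewrite -(fmorph_eq_rat (in_alg L)).
Qed.

Lemma fullL : (1%:M <= \sum_(s in G) VL s)%MS.
Proof.
have [rr [Grr Ur mpE]] := (elimT (galois_factors (sub1v _)) galL) al (memvf al).
have Urr : uniq rr by move: Ur; apply: map_uniq.
have cop : {in [in rr] &, forall i j : gal_of {:L}, j != i ->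
    coprimep ('X - (i al)%:P) ('X - (j al)%:P)}.
  move=> i j _ _ ji; rewrite coprimep_XsubC root_XsubC.
  by apply: contra ji => /eqP /gal_inj ->.
have key : (1%:M <= \sum_(x in rr) eigenspace (r al) (x al))%MS.
  have -> : (\sum_(x in rr) eigenspace (r al) (x al) =
            \sum_(x in rr) kermxpoly (r al) ('X - (x al)%:P))%MS.
    by apply: eq_bigr => x _; rewrite eigenspace_poly.
  have mpE' : minPoly 1 al = \prod_(x in rr) ('X - (x al)%:P).
    by rewrite mpE big_map big_uniq.
  rewrite -(kermxpoly_prod _ cop) -mpE'.
  have [q qE] := polyOver1P (minPolyOver 1 al).
  have r0 : r ((map_poly (in_alg L) q).[al]) = 0.
    by rewrite -qE (rootP (root_minPoly _ _)) (rK0 rhoA (in_alg L)).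
  rewrite qE.
  have [m0|[n e]] : m = 0 \/ exists n, m = n.+1.
    by case: (m) => [|n]; [left|right; exists n].
    by move: (r al) => g; subst m; rewrite thinmx0 sub0mx.
  have h := horner_r e q; rewrite r0 in h.
  subst m; rewrite !castmx_id in h.
  rewrite /kermxpoly h.
  by rewrite (@kermx0 L n.+1 n.+1) submx_refl.
apply: submx_trans key _.
apply/sumsmx_subP => x xrr.
by apply: (sumsmx_sup x); [exact: (subsetP Grr) | exact: eig_VL].
Qed.

End Core.

Lemma cond_transfer (L K : fieldType) (f : {rmorphism L -> K}) m k
  (X : 'M[L]_(k, m)) (U V : 'M[L]_m) (U' V' : 'M[K]_m) :
  (map_mx f U :=: U')%MS -> (map_mx f V :=: V')%MS ->
  (1%:M <= U + V)%MS -> (U :&: V <= (0 : 'M_m))%MS ->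
  (map_mx f X *m proj_mx U' V' == U')%MS = (X *m proj_mx U V == U)%MS.
Proof.
move=> eU eV full dir.
have <- : proj_mx (map_mx f U) (map_mx f V) = proj_mx U' V'.
  apply: proj_mx_uniq => //.
    have h : (map_mx f 1%:M <= map_mx f (U + V)%MS)%MS by rewrite map_submx.
    rewrite map_scalar_mx rmorph1 in h; apply: submx_trans h _.
    by rewrite (map_addsmx f U V) submx_refl.
  apply/eqP; rewrite -submx0.
  have h : (map_mx f (U :&: V)%MS <= map_mx f (0 : 'M_m))%MS by rewrite map_submx.
  rewrite map_mx0 in h; apply: submx_trans _ h.
  by rewrite (map_capmx f U V) submx_refl.
rewrite -map_proj_mx -map_mxM -!eU.
by rewrite !map_submx.
Qed.

Section Trans.
Variables (L : splittingFieldType rat) (m : nat) (rho : L -> 'M[rat]_m).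
Hypothesis rhoA : Emodule_action rho.
Hypothesis galL : galois 1%VS {:L}.
Local Notation VL := (VK rho (@id L)).
Local Notation G := ('Gal({:L} / 1%VS)%g).

Lemma rK_map (K : fieldType) (f : {rmorphism L -> K}) e :
  map_mx f (rK rho L e) = rK rho K e.
Proof. by rewrite /rK -map_mx_comp; apply: eq_map_mx => q /=; exact: fmorph_rat. Qed.

Lemma ratr_map (K : fieldType) (f : {rmorphism L -> K}) k (W : 'M[rat]_(k, m)) :
  map_mx f (map_mx (fun q : rat => ratr q) W) = map_mx (fun q : rat => ratr q) W.
Proof. by rewrite -map_mx_comp; apply: eq_map_mx => q /=; exact: fmorph_rat. Qed.

Lemma VK_map (K : fieldType) (f : {rmorphism L -> K}) s :
  (map_mx f (VL s) :=: VK rho f s)%MS.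
Proof.
apply: eqmx_trans (@map_bigcap _ _ f _ _ _ _ _) _.
rewrite /VK; under eq_bigr => i _ do rewrite map_eigenspace rK_map.
exact: eqmx_refl.
Qed.

Lemma SK_map (K : fieldType) (f : {rmorphism L -> K}) s :
  (map_mx f (SK rho id s) :=: SK rho f s)%MS.
Proof.
apply: eqmx_trans (@map_bigsum _ _ f _ _ _ _ _) _.
by apply: eqmx_sums => t _; exact: VK_map.
Qed.

Lemma SK2_map (K : fieldType) (f : {rmorphism L -> K}) s t :
  (map_mx f (SK2 rho id s t) :=: SK2 rho f s t)%MS.
Proof.
apply: eqmx_trans (@map_bigsum _ _ f _ _ _ _ _) _.
by apply: eqmx_sums => u _; exact: VK_map.
Qed.

Lemma VV_map (K : fieldType) (f : {rmorphism L -> K}) s t :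
  (map_mx f (VL s + VL t)%MS :=: VK rho f s + VK rho f t)%MS.
Proof.
apply: eqmx_trans (map_addsmx f _ _) _.
exact: adds_eqmx (VK_map f s) (VK_map f t).
Qed.

Lemma fullS s : s \in G -> (1%:M <= VL s + SK rho id s)%MS.
Proof.
move=> Gs; apply: submx_trans (fullL rhoA galL) _.
apply/sumsmx_subP => u Gu; case: (eqVneq u s) => [->|us].
  exact: addsmxSl.
apply: submx_trans (addsmxSr _ _); apply: (sumsmx_sup u) => //.
by rewrite Gu us.
Qed.

Lemma fullS2 s t : s \in G -> t \in G -> (1%:M <= (VL s + VL t) + SK2 rho id s t)%MS.
Proof.
move=> Gs Gt; apply: submx_trans (fullL rhoA galL) _.
apply/sumsmx_subP => u Gu; case: (eqVneq u s) => [->|us].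
  exact: submx_trans (addsmxSl _ _) (addsmxSl _ _).
case: (eqVneq u t) => [->|ut].
  exact: submx_trans (addsmxSr _ _) (addsmxSl _ _).
apply: submx_trans (addsmxSr _ _); apply: (sumsmx_sup u) => //.
by rewrite Gu us ut.
Qed.

Lemma VK_gal (k s : gal_of {:L}) : VK rho k s = VL (s * k)%g.
Proof. by rewrite /VK; apply: eq_bigr => i _; rewrite galM ?memvf. Qed.

Lemma SK_gal (k s : gal_of {:L}) : k \in G -> SK rho k s = SK rho id (s * k)%g.
Proof.
move=> Gk; rewrite /SK [RHS](reindex_inj (mulIg k)) /=.
apply: eq_big => [t|t _]; last exact: VK_gal.
by rewrite groupMr // (inj_eq (mulIg k)).
Qed.

Lemma SK2_gal (k s t : gal_of {:L}) : k \in G ->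
  SK2 rho k s t = SK2 rho id (s * k)%g (t * k)%g.
Proof.
move=> Gk; rewrite /SK2 [RHS](reindex_inj (mulIg k)) /=.
apply: eq_big => [u|u _]; last exact: VK_gal.
by rewrite groupMr // !(inj_eq (mulIg k)).
Qed.

End Trans.

Lemma cond_gal (L : splittingFieldType rat) m (rho : L -> 'M[rat]_m)
  (rhoA : Emodule_action rho) (galL : galois 1%VS {:L}) k (WQ : 'M[rat]_(k, m))
  (kap s : gal_of {:L}) :
  kap \in 'Gal({:L} / 1%VS)%g -> s \in 'Gal({:L} / 1%VS)%g ->
  (map_mx (fun q : rat => ratr q) WQ *m proj_mx (VK rho id (s * kap)%g) (SK rho id (s * kap)%g)
     == VK rho id (s * kap)%g)%MS =
  (map_mx (fun q : rat => ratr q) WQ *m proj_mx (VK rho id s) (SK rho id s)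
     == VK rho id s)%MS.
Proof.
move=> Gk Gs.
have h := cond_transfer (map_mx (fun q : rat => ratr q) WQ) (VK_map rho kap s)
  (SK_map rho kap s) (fullS rhoA galL Gs) (dirL rhoA galL Gs).
by rewrite ratr_map VK_gal SK_gal in h.
Qed.

Lemma cond_gal2 (L : splittingFieldType rat) m (rho : L -> 'M[rat]_m)
  (rhoA : Emodule_action rho) (galL : galois 1%VS {:L}) k (WQ : 'M[rat]_(k, m))
  (kap s t : gal_of {:L}) :
  kap \in 'Gal({:L} / 1%VS)%g -> s \in 'Gal({:L} / 1%VS)%g ->
  t \in 'Gal({:L} / 1%VS)%g -> s != t ->
  (map_mx (fun q : rat => ratr q) WQ *m
     proj_mx (VK rho id (s * kap)%g + VK rho id (t * kap)%g)%MS
             (SK2 rho id (s * kap)%g (t * kap)%g)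
     == VK rho id (s * kap)%g + VK rho id (t * kap)%g)%MS =
  (map_mx (fun q : rat => ratr q) WQ *m
     proj_mx (VK rho id s + VK rho id t)%MS (SK2 rho id s t)
     == VK rho id s + VK rho id t)%MS.
Proof.
move=> Gk Gs Gt st.
have h := cond_transfer (map_mx (fun q : rat => ratr q) WQ) (VV_map rho kap s t)
  (SK2_map rho kap s t) (fullS2 rhoA galL Gs Gt) (dirL2 rhoA galL Gs Gt st).
by rewrite ratr_map !VK_gal SK2_gal in h.
Qed.

Lemma cond_C (R : realType) (L : splittingFieldType rat) (iota : {rmorphism L -> R[i]})
  m (rho : L -> 'M[rat]_m)
  (rhoA : Emodule_action rho) (galL : galois 1%VS {:L}) k (WQ : 'M[rat]_(k, m))
  (s : gal_of {:L}) : s \in 'Gal({:L} / 1%VS)%g ->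
  (toC R WQ *m Psig iota rho s == Vsig iota rho s)%MS =
  (map_mx (fun q : rat => ratr q) WQ *m proj_mx (VK rho id s) (SK rho id s)
     == VK rho id s)%MS.
Proof.
move=> Gs.
have h := cond_transfer (map_mx (fun q : rat => ratr q) WQ) (VK_map rho iota s)
  (SK_map rho iota s) (fullS rhoA galL Gs) (dirL rhoA galL Gs).
by rewrite ratr_map in h; rewrite Psig_VK Vsig_VK -h.
Qed.

Lemma cond_C2 (R : realType) (L : splittingFieldType rat) (iota : {rmorphism L -> R[i]})
  m (rho : L -> 'M[rat]_m)
  (rhoA : Emodule_action rho) (galL : galois 1%VS {:L}) k (WQ : 'M[rat]_(k, m))
  (s t : gal_of {:L}) : s \in 'Gal({:L} / 1%VS)%g ->
  t \in 'Gal({:L} / 1%VS)%g -> s != t ->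
  (toC R WQ *m Psig2 iota rho s t == Vsig iota rho s + Vsig iota rho t)%MS =
  (map_mx (fun q : rat => ratr q) WQ *m
     proj_mx (VK rho id s + VK rho id t)%MS (SK2 rho id s t)
     == VK rho id s + VK rho id t)%MS.
Proof.
move=> Gs Gt st.
have h := cond_transfer (map_mx (fun q : rat => ratr q) WQ) (VV_map rho iota s t)
  (SK2_map rho iota s t) (fullS2 rhoA galL Gs Gt) (dirL2 rhoA galL Gs Gt st).
by rewrite ratr_map in h; rewrite Psig2_VK !Vsig_VK -h.
Qed.

Theorem lemma2p1 (R : realType) (L : splittingFieldType rat)
  (iota : {rmorphism L -> R[i]}) (m : nat) (rho : L -> 'M[rat]_m)
  (k : nat) (WQ : 'M[rat]_(k, m)) :
  galois 1%VS {:L} ->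
  Emodule_action rho ->
  (* (i) *)
  ((exists2 s0, s0 \in 'Gal({:L} / 1%VS)%g &
      (toC R WQ *m Psig iota rho s0 == Vsig iota rho s0)%MS) ->
    forall s, s \in 'Gal({:L} / 1%VS)%g ->
      (toC R WQ *m Psig iota rho s == Vsig iota rho s)%MS)
  /\
  (* (ii) *)
  (forall s0 t0, s0 \in 'Gal({:L} / 1%VS)%g -> t0 \in 'Gal({:L} / 1%VS)%g ->
    s0 != t0 ->
    (toC R WQ *m Psig2 iota rho s0 t0 == Vsig iota rho s0 + Vsig iota rho t0)%MS ->
    forall kap, kap \in 'Gal({:L} / 1%VS)%g ->
      (toC R WQ *m Psig2 iota rho (galcomp kap s0) (galcomp kap t0)
        == Vsig iota rho (galcomp kap s0) + Vsig iota rho (galcomp kap t0))%MS).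
Proof.
move=> galL rhoA; split.
  case=> s0 Gs0 h0 s Gs.
  have Gk : (s0^-1 * s)%g \in 'Gal({:L} / 1%VS)%g by rewrite groupM ?groupV.
  rewrite (cond_C iota rhoA galL WQ Gs) -[s](mulKVg s0) (cond_gal rhoA galL WQ Gk Gs0).
  by rewrite -(cond_C iota rhoA galL WQ Gs0).
move=> s0 t0 Gs0 Gt0 st h0 kap Gk.
have Gsk : galcomp kap s0 \in 'Gal({:L} / 1%VS)%g by rewrite groupM.
have Gtk : galcomp kap t0 \in 'Gal({:L} / 1%VS)%g by rewrite groupM.
have stk : galcomp kap s0 != galcomp kap t0 by rewrite /galcomp (inj_eq (mulIg kap)).
rewrite (cond_C2 iota rhoA galL WQ Gsk Gtk stk) /galcomp.
rewrite (cond_gal2 rhoA galL WQ Gk Gs0 Gt0 st).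
by rewrite -(cond_C2 iota rhoA galL WQ Gs0 Gt0 st).
Qed.
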